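(* Let $A$ be a ring with Jacobson radical $J$. Then $A$ is left arithmetical and semilocal if and only if $A/J$ is finite and $J$ is finitely generated as a left $A$-module.
   Context: A ring $A$ is called left arithmetical if: (a) every simple left $A$-module has finitely many elements; (b) every simple left $A$-module is finitely presented; (c) for every positive integer $n$, there are only finitely many isomorphism classes of simple left $A$-modules with exactly $n$ elements. A ring $A$ with Jacobson radical $J$ is semilocal if $A/J$ is Artinian (semisimple). *)

(* Defs.v *)
From Stdlib Require List.
From HB Require Import structures.
From mathcomp Require Import all_boot all_order all_algebra.
Set Implicit Arguments. Unset Strict Implicit. Unset Printing Implicit Defensive.
Import GRing.Theory.
Local Open Scope ring_scope.

Definition left_ideal (A : pzRingType) (I : A -> Prop) : Prop :=
  [/\ I 0, (forall x y, I x -> I y -> I (x + y)) &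
      (forall a x, I x -> I (a * x))].

Definition maximal_left_ideal (A : pzRingType) (I : A -> Prop) : Prop :=
  [/\ left_ideal I, ~ I 1 &
      (forall K : A -> Prop, left_ideal K -> (forall x, I x -> K x) ->
         ~ K 1 -> forall x, K x -> I x)].

Definition jacobson (A : pzRingType) (x : A) : Prop :=
  forall I : A -> Prop, maximal_left_ideal I -> I x.

Definition quot_jacobson_finite (A : pzRingType) : Prop :=
  exists s : seq A, forall x : A, exists2 y, y \in s & jacobson (x - y).

Definition jacobson_fg (A : pzRingType) : Prop :=
  exists n (g : 'I_n -> A), (forall i, jacobson (g i)) /\
    forall x, jacobson x -> exists c : 'I_n -> A, x = \sum_(i < n) c i * g i.

(* A is semilocal: A/J is (left) Artinian, i.e. DCC on left ideals of A/J,
   equivalently on left ideals of A containing J. *)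
Definition semilocal (A : pzRingType) : Prop :=
  forall I : nat -> A -> Prop,
    (forall k, left_ideal (I k)) ->
    (forall k x, jacobson x -> I k x) ->
    (forall k x, I k.+1 x -> I k x) ->
    exists N, forall k, (N <= k)%N -> forall x, I k x <-> I N x.

Definition submodule (A : pzRingType) (M : lmodType A) (P : M -> Prop) : Prop :=
  [/\ P 0, (forall x y, P x -> P y -> P (x + y)) &
      (forall (a : A) x, P x -> P (a *: x))].

Definition simple_module (A : pzRingType) (M : lmodType A) : Prop :=
  (exists x : M, x != 0) /\
  forall P : M -> Prop, submodule P -> (forall x, P x -> x = 0) \/ (forall x, P x).

Definition has_card (T : eqType) (n : nat) : Prop :=
  exists s : seq T, [/\ uniq s, size s = n & forall x, x \in s].

Definition finite_module (A : pzRingType) (M : lmodType A) : Prop :=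
  exists n, has_card M n.

Definition fin_presented (A : pzRingType) (M : lmodType A) : Prop :=
  exists n (g : 'I_n -> M),
    (forall x : M, exists c : 'rV[A]_n, x = \sum_(i < n) c ord0 i *: g i) /\
    exists m (r : 'I_m -> 'rV[A]_n),
      (forall j, \sum_(i < n) r j ord0 i *: g i = 0) /\
      (forall c : 'rV[A]_n, \sum_(i < n) c ord0 i *: g i = 0 ->
         exists d : 'I_m -> A, c = \sum_(j < m) d j *: r j).

Definition mod_iso (A : pzRingType) (M N : lmodType A) : Prop :=
  exists f : M -> N, [/\ (forall x y, f (x + y) = f x + f y),
                         (forall (a : A) x, f (a *: x) = a *: f x) &
                         bijective f].

Definition left_arithmetical (A : pzRingType) : Prop :=
  [/\ (forall M : lmodType A, simple_module M -> finite_module M),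
      (forall M : lmodType A, simple_module M -> fin_presented M) &
      (forall n : nat, exists Ms : seq (lmodType A),
         forall M : lmodType A, simple_module M -> has_card M n ->
           exists N : lmodType A, List.In N Ms /\ mod_iso M N)].

(* Main.v *)
Require Import Defs.
From Stdlib Require Import ClassicalEpsilon Classical FunctionalExtensionality PropExtensionality.
From HB Require Import structures.
From mathcomp Require Import all_boot all_order all_algebra.
Set Implicit Arguments. Unset Strict Implicit. Unset Printing Implicit Defensive.
Import GRing.Theory.
Local Open Scope ring_scope.
Definition pb (X : Prop) : bool := if excluded_middle_informative X then true else false.
Lemma pbP X : reflect X (pb X).
Proof. by rewrite /pb; case: excluded_middle_informative => h; constructor. Qed.

Lemma li_opp (A : pzRingType) (I : A -> Prop) : left_ideal I -> forall x, I x -> I (- x).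
Proof. by case=> _ _ hm x hx; rewrite -mulN1r; apply: hm. Qed.
Lemma li_sub (A : pzRingType) (I : A -> Prop) : left_ideal I -> forall x y, I x -> I y -> I (x - y).
Proof. move=> hI x y hx hy; case: (hI) => _ ha _; apply: ha => //; exact: li_opp. Qed.

Section Quot.
Variables (A : pzRingType) (P : A -> Prop).
Definition gen (x : A) := forall K, left_ideal K -> (forall z, P z -> K z) -> K x.
Lemma gen_ideal : left_ideal gen.
Proof.
split.
- by move=> K [] .
- by move=> x y hx hy K hK hP; case: (hK) => _ ha _; apply: ha; [apply: hx | apply: hy].
- by move=> a x hx K hK hP; case: (hK) => _ _ hm; apply: hm; apply: hx.
Qed.
Definition qr (a b : A) : bool := pb (gen (a - b)).
Lemma qr_refl a : qr a a.
Proof. by apply/pbP; rewrite subrr; case: gen_ideal. Qed.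
Lemma qr_sym a b : qr a b -> qr b a.
Proof. by move/pbP=> h; apply/pbP; rewrite -opprB; apply: li_opp gen_ideal _ h. Qed.
Lemma qr_trans a b c : qr a b -> qr b c -> qr a c.
Proof.
move/pbP=> h1 /pbP h2; apply/pbP.
have -> : a - c = (a - b) + (b - c) by rewrite addrA subrK.
by case: gen_ideal => _ ha _; apply: ha.
Qed.
Lemma ex_canon a : exists b, qr a b.
Proof. by exists a; apply: qr_refl. Qed.
Definition canon a := xchoose (ex_canon a).
Lemma canon_r a : qr a (canon a).
Proof. exact: xchooseP. Qed.
Lemma canon_eq a b : qr a b -> canon a = canon b.
Proof.
move=> hab; apply: eq_xchoose => z; apply/idP/idP => h.
- exact: qr_trans (qr_sym hab) h.
- exact: qr_trans hab h.
Qed.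
Record qt := QT { qrep : A; _ : canon qrep == qrep }.
HB.instance Definition _ := [isSub for qrep].
HB.instance Definition _ := [Choice of qt by <:].
Lemma canon_idem a : canon (canon a) == canon a.
Proof. by apply/eqP; symmetry; apply: canon_eq; apply: canon_r. Qed.
Definition pi a : qt := QT (canon_idem a).
Lemma piP a b : pi a = pi b <-> gen (a - b).
Proof.
split.
- move=> h; have : canon a = canon b by move: (congr1 qrep h).
  move=> e; apply/pbP; apply: (qr_trans (canon_r a)); rewrite e; exact: qr_sym (canon_r b).
- move=> /pbP h; apply: val_inj => /=; exact: canon_eq.
Qed.
Lemma piK q : pi (qrep q) = q.
Proof. by case: q => a ha; apply: val_inj => /=; apply/eqP. Qed.
Lemma piS q : exists a, q = pi a.
Proof. by exists (qrep q); rewrite piK. Qed.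
Lemma repr_pi a : gen (qrep (pi a) - a).
Proof. by apply/piP; rewrite piK. Qed.

Definition qzero := pi 0.
Definition qopp q := pi (- qrep q).
Definition qadd p q := pi (qrep p + qrep q).
Definition qscale (a : A) q := pi (a * qrep q).
Lemma qoppE a : qopp (pi a) = pi (- a).
Proof. apply/piP; rewrite -opprD; apply: li_opp gen_ideal _ _; exact: repr_pi. Qed.
Lemma qaddE a b : qadd (pi a) (pi b) = pi (a + b).
Proof.
apply/piP.
have -> : qrep (pi a) + qrep (pi b) - (a + b) = (qrep (pi a) - a) + (qrep (pi b) - b).
  by rewrite opprD addrACA.
by case: gen_ideal => _ ha _; apply: ha; apply: repr_pi.
Qed.
Lemma qscaleE c a : qscale c (pi a) = pi (c * a).
Proof.
apply/piP; rewrite -mulrBr; case: gen_ideal => _ _ hm; apply: hm; exact: repr_pi.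
Qed.
Lemma qaddA : associative qadd.
Proof. by move=> x y z; case: (piS x) (piS y) (piS z) => [a ->] [b ->] [c ->]; rewrite !qaddE addrA. Qed.
Lemma qaddC : commutative qadd.
Proof. by move=> x y; case: (piS x) (piS y) => [a ->] [b ->]; rewrite !qaddE addrC. Qed.
Lemma qadd0 : left_id qzero qadd.
Proof. by move=> x; case: (piS x) => [a ->]; rewrite /qzero qaddE add0r. Qed.
Lemma qaddN : left_inverse qzero qopp qadd.
Proof. by move=> x; case: (piS x) => [a ->]; rewrite qoppE qaddE addNr. Qed.
HB.instance Definition _ := GRing.isZmodule.Build qt qaddA qaddC qadd0 qaddN.
Lemma qaddE' a b : (pi a + pi b : qt) = pi (a + b).
Proof. exact: qaddE. Qed.
Lemma qscaleA a b v : qscale a (qscale b v) = qscale (a * b) v.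
Proof. by case: (piS v) => [c ->]; rewrite !qscaleE mulrA. Qed.
Lemma qscale1 : left_id 1 qscale.
Proof. by move=> v; case: (piS v) => [c ->]; rewrite !qscaleE mul1r. Qed.
Lemma qscaleDr : right_distributive qscale +%R.
Proof. by move=> a x y; case: (piS x) (piS y) => [b ->] [c ->]; rewrite qaddE' !qscaleE qaddE' mulrDr. Qed.
Lemma qscaleDl v : {morph qscale^~ v: a b / a + b}.
Proof. by move=> a b; case: (piS v) => [c ->]; rewrite !qscaleE qaddE' mulrDl. Qed.
HB.instance Definition _ := GRing.Zmodule_isLmodule.Build A qt qscaleA qscale1 qscaleDr qscaleDl.
Lemma qscaleE' c a : c *: (pi a : qt) = pi (c * a).
Proof. exact: qscaleE. Qed.
Lemma qzeroE : (0 : qt) = pi 0.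
Proof. by []. Qed.
Lemma pi_sum n (F : 'I_n -> A) : \sum_(i < n) (pi (F i) : qt) = pi (\sum_(i < n) F i).
Proof.
apply: (big_rec2 (fun (q : qt) b => q = pi b)) => // i q b _ ->; exact: qaddE'.
Qed.
Lemma gen_id : left_ideal P -> forall x, gen x <-> P x.
Proof. by move=> hP x; split => [h|h K hK hPK]; [apply: h | apply: hPK]. Qed.
End Quot.

Definition fg (A : pzRingType) (I : A -> Prop) := exists n (g : 'I_n -> A),
  (forall i, I (g i)) /\ forall x, I x -> exists c : 'I_n -> A, x = \sum_(i < n) c i * g i.
Definition reps (A : pzRingType) (I : A -> Prop) :=
  exists s : seq A, forall x : A, exists2 y, y \in s & I (x - y).

Lemma splitL m n (i : 'I_m) : split (lshift n i) = inl i.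
Proof. exact: (unsplitK (inl i)). Qed.
Lemma splitR m n (i : 'I_n) : split (rshift m i) = inr i.
Proof. exact: (unsplitK (inr i)). Qed.

Section Gen.
Variable A : pzRingType.
Implicit Types I K m : A -> Prop.

Lemma fg_split n1 n2 (g1 : 'I_n1 -> A) (g2 : 'I_n2 -> A) I :
 (forall i, I (g1 i)) -> (forall j, I (g2 j)) ->
 (forall x, I x -> exists (c1 : 'I_n1 -> A) (c2 : 'I_n2 -> A),
     x = \sum_(i < n1) c1 i * g1 i + \sum_(j < n2) c2 j * g2 j) -> fg I.
Proof.
move=> h1 h2 hx.
exists (n1 + n2)%N, (fun k => match split k with inl i => g1 i | inr j => g2 j end).
split; first by move=> k; case: (split k).
move=> x /hx [c1 [c2 ->]].
exists (fun k => match split k with inl i => c1 i | inr j => c2 j end).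
rewrite big_split_ord /=; congr (_ + _); apply: eq_bigr => i _.
- by rewrite splitL.
- by rewrite splitR.
Qed.

Lemma li_cap I K : left_ideal I -> left_ideal K -> left_ideal (fun x => I x /\ K x).
Proof.
case=> i0 iD iM [k0 kD kM]; split => //.
- by move=> x y [] ? ? [] ? ?; split; [apply: iD | apply: kD].
- by move=> a x [] ? ?; split; [apply: iM | apply: kM].
Qed.

Lemma comax I m x : left_ideal I -> maximal_left_ideal m -> I x -> ~ m x ->
  exists i0 n0, [/\ I i0, m n0 & i0 + n0 = 1].
Proof.
move=> hI [hm hm1 hmax] hx hmx.
pose K y := exists i n, [/\ I i, m n & y = i + n].
have hK : left_ideal K.
  case: hI => i0 iD iM; case: (hm) => m0 mD mM; split.
  - by exists 0, 0; rewrite addr0.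
  - move=> a b [i [n [hi hn ->]]] [i' [n' [hi' hn' ->]]].
    by exists (i + i'), (n + n'); split; [apply: iD | apply: mD | rewrite addrACA].
  - move=> a y [i [n [hi hn ->]]]; exists (a * i), (a * n).
    by split; [apply: iM | apply: mM | rewrite mulrDr].
have hmK : forall y, m y -> K y.
  by move=> y hy; exists 0, y; split => //; [case: hI | rewrite add0r].
case: (classic (K 1)) => [[i [n [hi hn e]]]|nK].
  by exists i, n; split.
exfalso; apply: hmx; apply: (hmax K hK hmK nK).
by exists x, 0; split => //; [case: hm | rewrite addr0].
Qed.

Lemma fg_cap I m i0 n0 : left_ideal I -> left_ideal m -> fg I -> fg m ->
  I i0 -> m n0 -> i0 + n0 = 1 -> fg (fun x => I x /\ m x).
Proof.
move=> [I0 ID IM] [m0 mD mM] [n1 [p [hp hpx]]] [n2 [q [hq hqx]]] hi0 hn0 e.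
have e1 : forall y, y - y * i0 = y * n0.
  by move=> y; rewrite -{1}(mulr1 y) -e mulrDr addrAC subrr add0r.
have e2 : forall y, y * i0 = y - y * n0.
  by move=> y; rewrite -{2}(mulr1 y) -e mulrDr addrK.
apply: (fg_split (g1 := fun k => p k - p k * i0) (g2 := fun l => q l * i0)).
- move=> k; split.
  + by apply: ID; [apply: hp | rewrite -mulN1r mulrA; apply: IM].
  + by rewrite e1; apply: mM; apply: hn0.
- move=> l; split; first by apply: IM.
  rewrite e2; apply: mD; first by apply: hq.
  by rewrite -mulN1r mulrA; apply: mM.
- move=> x [hxI hxm].
  case: (hpx x hxI) => a ea; case: (hqx x hxm) => b eb.
  exists a, b.
  have -> : \sum_(k < n1) a k * (p k - p k * i0) = x - x * i0.
    rewrite [in RHS]ea mulr_suml -sumrB; apply: eq_bigr => k _.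
    by rewrite mulrBr mulrA.
  have -> : \sum_(l < n2) b l * (q l * i0) = x * i0.
    by rewrite [in RHS]eb mulr_suml; apply: eq_bigr => l _; rewrite mulrA.
  by rewrite subrK.
Qed.

Lemma reps_cap I m : left_ideal I -> left_ideal m -> reps I -> reps m ->
  reps (fun x => I x /\ m x).
Proof.
move=> hI hm [s hs] [t ht].
have inh : inhabited A by constructor; exact: 0.
pose w y z := epsilon inh (fun w => I (w - y) /\ m (w - z)).
exists [seq w y z | y <- s, z <- t] => x.
case: (hs x) => y ys hy; case: (ht x) => z zt hz.
have [h1 h2] : I (w y z - y) /\ m (w y z - z) :=
  epsilon_spec inh (fun w => I (w - y) /\ m (w - z)) (ex_intro _ x (conj hy hz)).
exists (w y z); first exact: allpairs_f.
split.
- have -> : x - w y z = (x - y) - (w y z - y) by rewrite opprB addrA subrK.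
  exact: li_sub.
- have -> : x - w y z = (x - z) - (w y z - z) by rewrite opprB addrA subrK.
  exact: li_sub.
Qed.

End Gen.

Section Simple.
Variables (A : pzRingType) (M : lmodType A).

Lemma simple_cyclic (x : M) : simple_module M -> x != 0 -> forall z, exists a, z = a *: x.
Proof.
move=> [_ hs] hx.
have hP : submodule (fun z : M => exists a, z = a *: x).
  split.
  - by exists 0; rewrite scale0r.
  - by move=> y z [a ->] [b ->]; exists (a + b); rewrite scalerDl.
  - by move=> c y [a ->]; exists (c * a); rewrite scalerA.
case: (hs _ hP) => [h|h]; last exact: h.
by move: hx; rewrite (h x) ?eqxx //; exists 1; rewrite scale1r.
Qed.

Lemma ann_li (x : M) : left_ideal (fun a : A => a *: x = 0).
Proof.
split.
- by rewrite scale0r.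
- by move=> a b ha hb; rewrite scalerDl ha hb addr0.
- by move=> a b hb; rewrite -scalerA hb scaler0.
Qed.

Lemma ann_max (x : M) : simple_module M -> x != 0 ->
  maximal_left_ideal (fun a : A => a *: x = 0).
Proof.
move=> [hne hs] hx; split; first exact: ann_li.
  by rewrite scale1r; apply/eqP.
move=> K [K0 KD KM] hsub hK1 y hy.
have hP : submodule (fun z : M => exists k, K k /\ z = k *: x).
  split.
  - by exists 0; rewrite scale0r.
  - by move=> u v [a [ha ->]] [b [hb ->]]; exists (a + b); rewrite scalerDl; split => //; apply: KD.
  - by move=> c u [a [ha ->]]; exists (c * a); rewrite scalerA; split => //; apply: KM.
case: (hs _ hP) => h.
  by apply: h; exists y.
case: (h x) => k [hk ek].
exfalso; apply: hK1.
have -> : (1 : A) = (1 - k) + k by rewrite subrK.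
apply: KD => //; apply: hsub.
by rewrite scalerBl scale1r -ek subrr.
Qed.

Lemma jac_kill (a : A) : simple_module M -> jacobson a -> forall z : M, a *: z = 0.
Proof.
move=> hM hJ z; case: (eqVneq z 0) => [->|hz]; first by rewrite scaler0.
exact: (hJ _ (ann_max hM hz)).
Qed.

End Simple.

Lemma Qsimple (A : pzRingType) (m : A -> Prop) :
  maximal_left_ideal m -> simple_module (qt m).
Proof.
move=> hmax; have [hm hm1 hmx] := hmax.
split.
  exists (pi m 1); apply/eqP; rewrite qzeroE => /piP.
  by rewrite subr0 => /(gen_id hm).
move=> P [P0 PD PZ].
pose K (a : A) := P (pi m a).
have hK : left_ideal K.
  split.
  - by rewrite /K -qzeroE.
  - by move=> a b ha hb; rewrite /K -qaddE'; apply: PD.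
  - by move=> a b hb; rewrite /K -qscaleE'; apply: PZ.
have hmK : forall y, m y -> K y.
  move=> y hy; rewrite /K (_ : pi m y = pi m 0) -?qzeroE //.
  by apply/piP; rewrite subr0; apply/(gen_id hm).
case: (classic (K 1)) => h1.
  right => q; case: (piS q) => a ->.
  by rewrite -[a]mulr1 -qscaleE'; apply: PZ.
left => q hq; case: (piS q) => a ea; rewrite ea in hq *.
have : m a by apply: (hmx K hK hmK h1).
move=> ha; rewrite qzeroE; apply/piP; rewrite subr0; exact/(gen_id hm).
Qed.

Section Fwd.
Variable A : pzRingType.

Lemma Qreps (m : A -> Prop) : maximal_left_ideal m -> finite_module (qt m) -> reps m.
Proof.
move=> hmax [n [L [_ _ inL]]]; have [hm _ _] := hmax.
exists (map (@qrep _ m) L) => x.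
exists (qrep (pi m x)); first exact: map_f.
rewrite -opprB; apply: (li_opp hm); apply/(gen_id hm); exact: repr_pi.
Qed.

Lemma Qfg (m : A -> Prop) : maximal_left_ideal m -> fin_presented (qt m) -> fg m.
Proof.
move=> hmax [n [gq [hgen [mm [r [hr hrc]]]]]].
have [hm _ _] := hmax.
pose a i := qrep (gq i).
have ga : forall i, gq i = pi m (a i) by move=> i; rewrite piK.
have sumE : forall c : 'I_n -> A, \sum_(i < n) c i *: gq i = pi m (\sum_(i < n) c i * a i).
  by move=> c; rewrite -pi_sum; apply: eq_bigr => i _; rewrite ga qscaleE'.
case: (hgen (pi m 1)) => c; rewrite sumE => /piP /(gen_id hm) he.
set S := \sum_(i < n) c ord0 i * a i in he.
pose u j := \sum_(i < n) r j ord0 i * a i.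
have hu : forall j, m (u j).
  move=> j; move: (hr j); rewrite sumE qzeroE => /piP; rewrite subr0 => /(gen_id hm) h; exact: h.
have [m0 mD mM] := hm.
apply: (fg_split (g1 := fun _ : 'I_1 => 1 - S) (g2 := u)) => // x hx.
pose v : 'rV[A]_n := \row_i (x * c ord0 i).
have xS : x * S = x - x * (1 - S) by rewrite mulrBr mulr1 opprB addrC subrK.
have hv : \sum_(i < n) v ord0 i *: gq i = 0.
  rewrite sumE qzeroE; apply/piP; rewrite subr0; apply/(gen_id hm).
  have -> : \sum_(i < n) v ord0 i * a i = x * S.
    by rewrite /S mulr_sumr; apply: eq_bigr => i _; rewrite mxE mulrA.
  by rewrite xS; apply: li_sub => //; apply: mM.
case: (hrc v hv) => d hd.
exists (fun _ => x), d; rewrite big_ord1.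
have -> : \sum_(j < mm) d j * u j = x * S.
  have -> : x * S = \sum_(i < n) v ord0 i * a i.
    by rewrite /S mulr_sumr; apply: eq_bigr => i _; rewrite mxE mulrA.
  rewrite hd.
  under [RHS]eq_bigr => i _ do rewrite summxE mulr_suml.
  rewrite exchange_big /=; apply: eq_bigr => j _.
  rewrite /u mulr_sumr; apply: eq_bigr => i _; rewrite !mxE mulrA.
  by [].
by rewrite xS addrC subrK.
Qed.

End Fwd.

Section Fwd2.
Variable A : pzRingType.
Definition ExM (I : A -> Prop) := exists m, maximal_left_ideal m /\ exists x, I x /\ ~ m x.
Definition inhT : inhabited (A -> Prop) := inhabits (fun _ => True).
Definition cm (I : A -> Prop) :=
  epsilon inhT (fun m => maximal_left_ideal m /\ exists x, I x /\ ~ m x).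
Definition nxt (I : A -> Prop) : A -> Prop := fun y => I y /\ (ExM I -> cm I y).
Definition chain k := iter k nxt (fun _ => True).
Definition Inv (I : A -> Prop) :=
  [/\ left_ideal I, (forall x, jacobson x -> I x), reps I & fg I].

Lemma Inv0 : Inv (fun _ => True).
Proof.
split => //.
- by exists [:: 0] => x; exists 0; rewrite ?mem_seq1.
- exists 1%N, (fun _ => 1); split => // x _; exists (fun _ => x).
  by rewrite big_ord1 mulr1.
Qed.

Lemma InvS I : left_arithmetical A -> Inv I -> Inv (nxt I).
Proof.
move=> [La Lb _] [hI hJ hr hf].
case: (classic (ExM I)) => hE; last first.
  have -> : nxt I = I.
    apply: functional_extensionality => y; apply: propositional_extensionality.
    by split => [[]//|hy]; split => // /hE.
  by split.
have [hmax [x [hx hnx]]] :=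
  epsilon_spec inhT (fun m => maximal_left_ideal m /\ exists x, I x /\ ~ m x) hE.
have -> : nxt I = fun y => I y /\ cm I y.
  apply: functional_extensionality => y; apply: propositional_extensionality.
  by split => [[h1 h2]|[h1 h2]]; split => //; apply: h2.
have [hm _ _] := hmax.
split.
- exact: li_cap.
- by move=> y hy; split; [apply: hJ | apply: hy].
- apply: reps_cap => //; apply: Qreps => //; apply: La; exact: Qsimple.
- have [i0 [n0 [hi0 hn0 e]]] := comax hI hmax hx hnx.
  apply: (fg_cap hI hm hf _ hi0 hn0 e).
  apply: Qfg => //; apply: Lb; exact: Qsimple.
Qed.

Lemma forward : left_arithmetical A -> semilocal A ->
  quot_jacobson_finite A /\ jacobson_fg A.
Proof.
move=> hLA hSL.
have hInv : forall k, Inv (chain k).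
  elim=> [|k IH]; first exact: Inv0.
  exact: InvS.
case: (hSL chain).
- by move=> k; case: (hInv k).
- by move=> k; case: (hInv k).
- by move=> k x [].
move=> N hN.
have E : (@jacobson A) = chain N.
  apply: functional_extensionality => x; apply: propositional_extensionality.
  split; first by case: (hInv N) => _ h _ _; apply: h.
  move=> hx m hm; apply: NNPP => hnm.
  have hE : ExM (chain N) by exists m; split => //; exists x.
  have [_ [x' [hx' hnx']]] :=
    epsilon_spec inhT (fun m => maximal_left_ideal m /\ exists x, chain N x /\ ~ m x) hE.
  have := (hN N.+1 (leqnSn N) x').2 hx'.
  by case=> _ /(_ hE).
case: (hInv N) => _ _ hr hf.
by rewrite -E in hr hf; split.
Qed.
End Fwd2.

Lemma stab_nat (f : nat -> nat) : (forall k, (f k.+1 <= f k)%N) ->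
  exists N, forall k, (N <= k)%N -> f k = f N.
Proof.
have mono : forall (g : nat -> nat), (forall k, (g k.+1 <= g k)%N) ->
    forall j k, (j <= k)%N -> (g k <= g j)%N.
  move=> g hg j k /subnKC <-; elim: (k - j)%N => [|d IH]; first by rewrite addn0.
  by rewrite addnS (leq_trans (hg _)).
suff H : forall B (g : nat -> nat), (g 0 <= B)%N -> (forall k, (g k.+1 <= g k)%N) ->
    exists N, forall k, (N <= k)%N -> g k = g N.
  by move=> hf; apply: (H (f 0)).
elim=> [|B IH] g hg0 hg.
  exists 0%N => k _; apply/eqP; rewrite eqn_leq (leq_trans (mono g hg 0 k _)) //=.
  by rewrite (leq_trans hg0).
case: (classic (forall k, g k = g 0)) => [h|]; first by exists 0%N => k _; apply: h.
move=> /not_all_ex_not [k0 hk0].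
have lt : (g k0 < g 0)%N by rewrite ltn_neqAle; apply/andP; split; [apply/eqP | apply: mono].
case: (IH (fun k => g (k0 + k)%N)).
- by rewrite addn0 -ltnS (leq_trans lt).
- by move=> k; rewrite addnS.
move=> N hN; exists (k0 + N)%N => k hk.
have hk0k : (k0 <= k)%N by rewrite (leq_trans (leq_addr N k0)).
by rewrite -(subnKC hk0k) hN // -(leq_add2l k0) subnKC.
Qed.

Lemma cnt_le (T : eqType) (p q : pred T) (s : seq T) :
  (forall y, y \in s -> p y -> q y) -> (count p s <= count q s)%N.
Proof.
elim: s => //= z s IH h.
apply: leq_add; last by apply: IH => y ys; apply: h; rewrite inE ys orbT.
by case: (boolP (p z)) => // /(h z (mem_head _ _)) ->.
Qed.

Lemma cnt_lt (T : eqType) (p q : pred T) (s : seq T) y :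
  (forall y, y \in s -> p y -> q y) -> y \in s -> q y -> ~~ p y ->
  (count p s < count q s)%N.
Proof.
elim: s => //= z s IH h; rewrite inE => /orP [/eqP <-|ys] hq hp.
  by rewrite (negbTE hp) hq add0n add1n ltnS; apply: cnt_le => u us; apply: h; rewrite inE us orbT.
have hzz : (p z <= q z)%N by case: (boolP (p z)) => // /(h z (mem_head _ _)) ->.
by rewrite -addnS; apply: leq_add => //; apply: IH => // u us; apply: h; rewrite inE us orbT.
Qed.

Lemma In_mem (T : eqType) (x : T) (s : seq T) : x \in s -> List.In x s.
Proof. by elim: s => //= z s IH; rewrite inE => /orP [/eqP ->|/IH]; [left|right]. Qed.

Lemma In_map_seq (T : eqType) (U : Type) (f : T -> U) (x : T) (s : seq T) :
  x \in s -> List.In (f x) (map f s).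
Proof. by elim: s => //= z s IH; rewrite inE => /orP [/eqP ->|/IH]; [left|right]. Qed.

Section Bwd.
Variables (A : pzRingType) (s : seq A).
Hypothesis hs : forall x : A, exists2 y, y \in s & jacobson (x - y).

Lemma bwd_semilocal : semilocal A.
Proof.
move=> I hI hJ hdec.
have monoI : forall j k, (j <= k)%N -> forall x, I k x -> I j x.
  move=> j k /subnKC <-; elim: (k - j)%N => [|d IH] x; first by rewrite addn0.
  by rewrite addnS => /hdec /IH.
pose f k := count (fun y => pb (I k y)) s.
have [N hN] : exists N, forall k, (N <= k)%N -> f k = f N.
  apply: stab_nat => k; apply: sub_count => y /pbP /hdec /pbP; exact.
exists N => k hk x; split; first exact: monoI.
move=> hx; case: (hs x) => y ys hy.
have hJk := hJ k _ hy.
have hNy : I N y.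
  have -> : y = x - (x - y) by rewrite opprB addrC subrK.
  by apply: li_sub (hI N) _ _ hx (hJ N _ hy).
have hky : I k y.
  apply: NNPP => hny.
  have := cnt_lt (p := fun y => pb (I k y)) (q := fun y => pb (I N y)) _ ys.
  move=> /(_ _ _ _) H.
  have : (f k < f N)%N.
    apply: H; [|exact/pbP|exact/pbP].
    by move=> u _ /pbP hu; apply/pbP; apply: monoI hu.
  by rewrite hN // ltnn.
have -> : x = (x - y) + y by rewrite subrK.
by case: (hI k) => _ hD _; apply: hD.
Qed.

Lemma reach (M : lmodType A) (x : M) : simple_module M -> x != 0 ->
  forall z : M, exists2 y, y \in s & y *: x = z.
Proof.
move=> hM hx z; case: (simple_cyclic hM hx z) => a ->.
case: (hs a) => y ys hy; exists y => //.
have -> : a = (a - y) + y by rewrite subrK.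
by rewrite scalerDl (jac_kill hM hy) add0r.
Qed.

Lemma bwd_a (M : lmodType A) : simple_module M -> finite_module M.
Proof.
move=> hM; case: (hM) => [[x hx] _].
exists (size (undup (map (fun y => y *: x) s))), (undup (map (fun y => y *: x) s)).
split => //; first exact: undup_uniq.
move=> z; case: (reach hM hx z) => y ys <-; rewrite mem_undup; exact: map_f.
Qed.

Hypothesis hf : jacobson_fg A.

Lemma bwd_b (M : lmodType A) : simple_module M -> fin_presented M.
Proof.
move=> hM; case: (hM) => [[x hx] _].
have [nJ [gJ [hgJ hgJc]]] := hf.
pose p := size s.
pose h (j : 'I_(p + nJ)) : A := match split j with
  | inl i => if nth 0 s i *: x == 0 then nth 0 s i else 0
  | inr k => gJ k end.
exists 1%N, (fun _ => x); split.
  move=> z; case: (reach hM hx z) => y _ <-; exists (const_mx y).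
  by rewrite big_ord1 mxE.
exists (p + nJ)%N, (fun j => const_mx (h j)); split.
  move=> j; rewrite big_ord1 mxE /h; case: (split j) => [i|k].
    by case: eqP => // _; rewrite scale0r.
  exact: (jac_kill hM (hgJ k)).
move=> c; rewrite big_ord1 => hc.
set a := c ord0 ord0 in hc.
case: (hs a) => y ys hy.
have hyx : y *: x = 0.
  have -> : y = a - (a - y) by rewrite opprB addrC subrK.
  by rewrite scalerBl hc (jac_kill hM hy) subr0.
case: (hgJc _ hy) => e he.
have hi : (index y s < p)%N by rewrite index_mem.
pose i0 : 'I_p := Ordinal hi.
exists (fun j => match split j with inl i => ((i == i0)%:R : A) | inr k => e k end).
apply/matrixP => u v; rewrite !ord1 summxE big_split_ord /=.
under eq_bigr => i _ do rewrite !mxE splitL /h splitL.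
under [X in _ = _ + X]eq_bigr => i _ do rewrite !mxE splitR /h splitR.
rewrite -he (bigD1 i0) //= big1; last first.
  by move=> i /negbTE ->; rewrite mul0r.
rewrite eqxx mul1r addr0 nth_index // hyx eqxx.
by rewrite addrC subrK.
Qed.

End Bwd.

Section Bwd2.
Variables (A : pzRingType) (s : seq A).
Hypothesis hs : forall x : A, exists2 y, y \in s & jacobson (x - y).

Lemma bwd_c (n : nat) : exists Ms : seq (lmodType A),
  forall M : lmodType A, simple_module M -> has_card M n ->
    exists N : lmodType A, List.In N Ms /\ mod_iso M N.
Proof.
pose p := size s.
pose mb (b : {ffun 'I_p -> bool}) : A -> Prop :=
  fun a => exists i : 'I_p, b i /\ jacobson (a - nth 0 s i).
exists [seq (qt (mb b) : lmodType A) | b <- enum {ffun 'I_p -> bool}].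
move=> M hM _; case: (hM) => [[x hx] _].
pose b := [ffun i : 'I_p => nth 0 s i *: x == 0].
exists (qt (mb b) : lmodType A); split.
  by apply: (In_map_seq (fun b => (qt (mb b) : lmodType A))); rewrite mem_enum.
have annE : forall a, gen (mb b) a <-> a *: x = 0.
  move=> a; split.
    move=> hg; apply: (hg (fun c => c *: x = 0)); first exact: ann_li.
    move=> z [i [hbi hJ]]; rewrite ffunE in hbi.
    have -> : z = (z - nth 0 s i) + nth 0 s i by rewrite subrK.
    by rewrite scalerDl (jac_kill hM hJ) (eqP hbi) addr0.
  move=> ha K hK hPK; apply: hPK.
  case: (hs a) => y ys hy.
  have hi : (index y s < p)%N by rewrite index_mem.
  exists (Ordinal hi); split => /=; last by rewrite nth_index.
  rewrite ffunE /= nth_index //.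
  have -> : y = a - (a - y) by rewrite opprB addrC subrK.
  by rewrite scalerBl ha (jac_kill hM hy) subr0.
pose g (q : qt (mb b)) : M := qrep q *: x.
have gpi : forall a, g (pi (mb b) a) = a *: x.
  move=> a; apply/eqP; rewrite -subr_eq0 -scalerBl; apply/eqP/annE; exact: repr_pi.
pose f (z : M) : qt (mb b) := pi (mb b) (nth 0 s (find (fun y => y *: x == z) s)).
have fK : cancel f g.
  move=> z; rewrite /f gpi; apply/eqP.
  apply: (nth_find 0 (a := fun y => y *: x == z)).
  case: (reach hs hM hx z) => y ys hy; apply/hasP; exists y => //; exact/eqP.
have gK : cancel g f.
  move=> q; case: (piS q) => a ->; rewrite gpi /f; apply/piP/annE.
  rewrite scalerBl; apply/eqP; rewrite subr_eq0; apply/eqP.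
  apply/eqP; apply: (nth_find 0 (a := fun y => y *: x == a *: x)).
  case: (reach hs hM hx (a *: x)) => y ys hy; apply/hasP; exists y => //; exact/eqP.
have gadd : forall q1 q2, g (q1 + q2) = g q1 + g q2.
  move=> q1 q2; case: (piS q1) (piS q2) => [a ->] [c ->].
  by rewrite qaddE' !gpi scalerDl.
have gscale : forall (c : A) q, g (c *: q) = c *: g q.
  move=> c q; case: (piS q) => a ->.
  by rewrite qscaleE' !gpi scalerA.
exists f; split.
- by move=> z w; apply: (can_inj gK); rewrite fK gadd !fK.
- by move=> c z; apply: (can_inj gK); rewrite fK gscale fK.
- by exists g.
Qed.
End Bwd2.

Theorem proposition2p2 (A : pzRingType) :
  left_arithmetical A /\ semilocal A <->
  quot_jacobson_finite A /\ jacobson_fg A.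
Proof.
split.
- by move=> [hLA hSL]; apply: forward.
- move=> [[s hs] hf]; split; last exact: bwd_semilocal hs.
  split.
  + exact: bwd_a hs.
  + exact: bwd_b hs hf.
  + exact: bwd_c hs.
Qed.
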